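(* Let $X$ be a finite discrete space with at least two elements, $\Gamma$ a nonempty countable set, $\varphi:\Gamma\to\Gamma$ any map. Then $(X^\Gamma,\sigma_\varphi)$ is dense distributional chaotic if and only if $\varphi$ has no periodic point.
   Context: $X^\Gamma$ has the product topology and a fixed compatible metric $d$; $\sigma_\varphi((x_\alpha)_{\alpha\in\Gamma})=(x_{\varphi(\alpha)})_{\alpha\in\Gamma}$. For $f=\sigma_\varphi$, $x,y\in X^\Gamma$, $t>0$: $\xi(x,y,t,n)=\#\{i\in\{0,\dots,n-1\}:d(f^i(x),f^i(y))<t\}$, $F_{xy}(t)=\liminf_n \xi(x,y,t,n)/n$, $F^*_{xy}(t)=\limsup_n\xi(x,y,t,n)/n$. The system is dense distributional chaotic if there exist a dense uncountable set $A\subseteq X^\Gamma$ and $\varepsilon>0$ such that for all distinct $x,y\in A$: $F^*_{xy}(s)=1$ for every $s>0$ and $F_{xy}(\varepsilon)=0$. *)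

(* Defs.v *)
From HB Require Import structures.
From mathcomp Require Import all_boot all_order all_algebra.
From mathcomp Require Import all_classical all_reals all_analysis.
Set Implicit Arguments. Unset Strict Implicit. Unset Printing Implicit Defensive.
Import Order.TTheory GRing.Theory Num.Theory.
Local Open Scope classical_set_scope.
Local Open Scope ring_scope.

Definition is_metric (R : realType) (T : Type) (d : T -> T -> R) : Prop :=
  [/\ (forall x y, 0 <= d x y),
      (forall x y, d x y = 0 <-> x = y),
      (forall x y, d x y = d y x) &
      (forall x y z, d x z <= d x y + d y z)].

Definition metric_compatible (R : realType) (T : topologicalType)
    (d : T -> T -> R) : Prop :=
  forall U : set T, open U <->
    (forall x, U x -> exists2 e : R, 0 < e & [set y | d x y < e] `<=` U).

Definition sigma_phi (G X : Type) (phi : G -> G) (x : G -> X) : G -> X :=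
  fun a => x (phi a).

Definition xi (R : realType) (T : Type) (d : T -> T -> R) (f : T -> T)
    (x y : T) (t : R) (n : nat) : nat :=
  #|[set i : 'I_n | d (iter i f x) (iter i f y) < t]|.

Definition F_low (R : realType) (T : Type) (d : T -> T -> R) (f : T -> T)
    (x y : T) (t : R) : \bar R :=
  limn_einf (fun n => ((xi d f x y t n)%:R / n%:R)%:E).

Definition F_up (R : realType) (T : Type) (d : T -> T -> R) (f : T -> T)
    (x y : T) (t : R) : \bar R :=
  limn_esup (fun n => ((xi d f x y t n)%:R / n%:R)%:E).

Definition dense_distributional_chaotic (R : realType) (T : topologicalType)
    (d : T -> T -> R) (f : T -> T) : Prop :=
  exists A : set T,
    [/\ dense A, ~ countable A &
      exists2 eps : R, 0 < eps &
        forall x y, A x -> A y -> x <> y ->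
          (forall s : R, 0 < s -> F_up d f x y s = 1%:E) /\
          F_low d f x y eps = 0%:E].

Definition has_periodic_point (G : Type) (phi : G -> G) : Prop :=
  exists a : G, exists n : nat, (0 < n)%N /\ iter n phi a = a.

(* Main.v *)
Require Import Defs.
From HB Require Import structures.
From mathcomp Require Import all_boot all_order all_algebra.
From mathcomp Require Import all_classical all_reals all_analysis.
From mathcomp Require Import lra zify.
Set Implicit Arguments. Unset Strict Implicit. Unset Printing Implicit Defensive.
Import Order.TTheory GRing.Theory Num.Theory.
Local Open Scope classical_set_scope.
Local Open Scope ring_scope.

Section Topo.
Variables (R : realType) (X : discreteTopologicalType) (G : countType).
Variable d : {ptws G -> X} -> {ptws G -> X} -> R.
Hypothesis fX : finite_set [set: X].
Hypothesis Hd : is_metric d.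
Hypothesis Hc : @metric_compatible R {ptws G -> X} d.

Definition cyl (n : nat) (u v : G -> X) := forall g : G, (pickle g < n)%N -> v g = u g.

Lemma cpt : compact [set: {ptws G -> X}].
Proof.
have := @tychonoff G (fun _ => X) (fun _ => setT) (fun _ => finite_compact fX).
by have -> : [set f : G -> X | forall i : G, [set: X] (f i)] = setT by apply/seteqP; split.
Qed.

Lemma pc (i : G) (u : {ptws G -> X}) : nbhs u [set v : {ptws G -> X} | v i = u i].
Proof.
have h := @proj_continuous G (fun _ => X) i u.
have : nbhs (u i) [set u i] by apply: open_nbhs_nbhs; split => //; exact: discrete_open.
by move/h.
Qed.

Lemma cv (v : nat -> {ptws G -> X}) (u : {ptws G -> X}) :
  (forall g, \forall n \near \oo, v n g = u g) -> v @ \oo --> u.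
Proof.
move=> H.
have := @cvg_sup (G -> X) G (fun i => Topological.class
    (initial_topology (fun f : (G -> X) => f i))) (v @ \oo) u _.
move=> [_ ]; move=> h; apply: h => i A /=.
rewrite (@nbhsE (initial_topology (fun f : G -> X => f i))) => -[B [oB Bu] BA].
case: oB => C oC CB.
move: (H i); apply: filterS => n vn; apply: BA; rewrite -CB /= vn.
by rewrite -CB in Bu.
Qed.

Lemma ball_open (u : {ptws G -> X}) e : open [set v : {ptws G -> X} | d u v < e].
Proof.
case: Hd => d0 dE dC dT.
apply/Hc => v /= uv; exists (e - d u v); first by rewrite subr_gt0.
move=> w /= vw; have := dT u v w; lra.
Qed.

Lemma ball_nbhs (u : {ptws G -> X}) e : 0 < e -> nbhs u [set v : {ptws G -> X} | d u v < e].
Proof.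
move=> e0; apply: open_nbhs_nbhs; split; first exact: ball_open.
case: Hd => d0 dE dC dT; by rewrite /= (proj2 (dE u u)).
Qed.

Lemma cyl_nbhs n (u : {ptws G -> X}) : nbhs u [set v : {ptws G -> X} | cyl n u v].
Proof.
elim: n => [|n IH].
  by apply: filterS (@filterT _ (nbhs u) _ ) => v _ g; rewrite ltn0.
case E: (@unpickle G n) => [g0|].
  apply: filterS (filterI IH (pc g0 u)) => v [c e] g.
  rewrite ltnS leq_eqVlt => /orP [/eqP Hg|]; last exact: c.
  by move: E; rewrite -Hg pickleK => -[->].
apply: filterS IH => v c g; rewrite ltnS leq_eqVlt => /orP [/eqP Hg|]; last exact: c.
by move: E; rewrite -Hg pickleK.
Qed.

Lemma nbhs_cyl (U : set {ptws G -> X}) u : open U -> U u ->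
  exists n, forall v, cyl n u v -> U v.
Proof.
move=> oU Uu; apply: contrapT => Hn.
have Hn' n : exists v : {ptws G -> X}, cyl n u v /\ ~ U v.
  apply: contrapT => Hno; apply: Hn; exists n => v cv; apply: contrapT => nU.
  by apply: Hno; exists v.
have [vs Hvs] := choice Hn'.
have cvg : vs @ \oo --> u.
  apply: cv => g; exists (pickle g).+1 => // n /= Hn2; apply: (Hvs n).1; exact: leq_trans Hn2.
have : \forall n \near \oo, U (vs n) by apply: cvg; apply: open_nbhs_nbhs.
case=> N _ HN; exact: (Hvs N).2 (HN N (leqnn N)).
Qed.

Lemma U1 s : 0 < s -> exists n, forall u v : {ptws G -> X}, cyl n u v -> d u v < s.
Proof.
move=> s0; case: Hd => d0 dE dC dT.
have NC := (compact_near_coveringP _).1 cpt.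
have := NC nat (\oo) (fun n v => forall w, cyl n v w -> d v w < s) _.
case.
- move=> u _.
  have s20 : 0 < s / 2 by rewrite divr_gt0.
  have uu : d u u < s / 2 by rewrite (proj2 (dE u u)).
  have [N HN] := nbhs_cyl (ball_open u (s/2)) uu.
  exists ([set v | cyl N u v], [set n | (N <= n)%N]).
    by split => //; [exact: cyl_nbhs | exists N].
  move=> [v' n] /= [cv Nn] w cw.
  have cuw : cyl N u w by move=> g Hg; rewrite cw ?cv //; exact: leq_trans Hg Nn.
  have := HN _ cv; have := HN _ cuw => /= h1 h2.
  have := dT v' u w; rewrite (dC v' u). move=> h3; lra.
move=> N _ HN; exists N => u v; exact: (HN N (leqnn N) u).
Qed.

Lemma U2 (a : G) : exists2 c, 0 < c & forall u v : {ptws G -> X}, d u v < c -> u a = v a.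
Proof.
case: Hd => d0 dE dC dT.
have NC := (compact_near_coveringP _).1 cpt.
have HU : forall u : {ptws G -> X}, setT u -> \forall v' \near u & e \near 0^'+, (forall w, d v' w < e -> w a = v' a).
  move=> u _.
  have oS : open [set w : {ptws G -> X} | w a = u a].
    rewrite openE => w /= wa; rewrite /interior.
    by apply: filterS (pc a w) => z /= ->.
  have [e e0 He] := (Hc _).1 oS u erefl.
  have e20 : 0 < e / 2 by rewrite divr_gt0.
  exists ([set v | d u v < e / 2], [set r | r < e / 2]).
    split => //; [exact: ball_nbhs | exact: nbhs_right_lt].
  move=> [v' r] /= [uv re] w vw.
  have h1 : d u w < e by have := dT u v' w; lra.
  by rewrite (He _ h1) (He v') //=; lra.
have HP : \forall e \near 0^'+, setT `<=` (fun v : {ptws G -> X} => forall w, d v w < e -> w a = v a).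
  apply: NC; exact: HU.
have [c [c0 Hc']] := filter_ex (filterI (nbhs_right_gt 0) HP).
exists c => // u v uv; apply/esym; exact: (Hc' u I v uv).
Qed.

End Topo.

Section Dens.
Variable R : realType.

Definition ratio (P : nat -> bool) n : \bar R := ((#|[set i : 'I_n | P i]|)%:R / n%:R)%:E.

Lemma card_count (P : nat -> bool) n : #|[set i : 'I_n | P i]| = count P (iota 0 n).
Proof.
rewrite -sum1_card -sum1_count.
have -> : (\sum_(i in [set i : 'I_n | P i]) 1 = \sum_(i < n | P i) 1)%N.
  by apply: eq_bigl => i; apply/idP/idP; rewrite in_setE.
by rewrite -(big_mkord P (fun _ => 1%N)) /index_iota subn0.
Qed.

Lemma card_ge (P : nat -> bool) n a : (forall i, (a <= i < n)%N -> P i) ->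
  (n - a <= #|[set i : 'I_n | P i]|)%N.
Proof.
move=> H; rewrite card_count.
case: (leqP a n) => an; last by have -> : (n - a = 0)%N by apply/eqP; rewrite subn_eq0 ltnW.
have -> : iota 0 n = iota 0 a ++ iota a (n - a) by rewrite -iotaD subnKC.
rewrite count_cat.
have -> : (count P (iota a (n - a)) = n - a)%N.
  rewrite (@eq_in_count _ P predT) ?count_predT ?size_iota //.
  move=> i; rewrite mem_iota subnKC // => /H; by [].
exact: leq_addl.
Qed.

Lemma card_le (P : nat -> bool) n a : (forall i, (i < n)%N -> P i -> (i < a)%N) ->
  (#|[set i : 'I_n | P i]| <= a)%N.
Proof.
move=> H; rewrite card_count.
case: (leqP n a) => an.
  by apply: leq_trans (count_size _ _) _; rewrite size_iota.
have -> : iota 0 n = iota 0 a ++ iota a (n - a) by rewrite -iotaD subnKC // ltnW.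
rewrite count_cat.
have -> : (count P (iota a (n - a)) = 0)%N.
  apply/eqP; rewrite -leqn0 leqNgt -has_count; apply/hasPn => i.
  rewrite mem_iota subnKC ?(ltnW an) // => /andP [ai ilt].
  by apply/negP => /(H _ ilt); rewrite ltnNge ai.
by rewrite addn0; apply: leq_trans (count_size _ _) _; rewrite size_iota.
Qed.

Lemma card_leT (P : nat -> bool) n : (#|[set i : 'I_n | P i]| <= n)%N.
Proof. by apply: card_le => i. Qed.

Lemma ratio_ge0 P n : (0 <= ratio P n)%E.
Proof. by rewrite lee_fin divr_ge0. Qed.

Lemma ratio_le1 P n : (ratio P n <= 1)%E.
Proof.
rewrite lee_fin; case: n => [|n]; first by rewrite invr0 mulr0.
by rewrite ler_pdivrMr ?ltr0Sn // mul1r ler_nat card_leT.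
Qed.

Lemma getK (e : R) : 0 < e -> exists K : nat, 1 < e * K.+1%:R.
Proof.
move=> e0; exists (Num.truncn (e^-1)).
have h := truncnS_gt (e^-1).
have : e * e^-1 < e * (Num.truncn e^-1).+1%:R by rewrite ltr_pM2l.
by rewrite mulfV ?gt_eqF.
Qed.

Lemma Fup1 (P : nat -> bool) :
  (forall K N, exists n a, [/\ (N <= n)%N, (0 < n)%N, (a * K.+1 <= n)%N &
      forall i, (a <= i < n)%N -> P i]) ->
  limn_esup (ratio P) = 1%E.
Proof.
move=> H; rewrite limn_esup_lim.
suff -> : esups (ratio P) = fun _ => 1%E by rewrite lim_cst.
apply/funext => N /=; apply/eqP; rewrite eq_le; apply/andP; split.
  by apply: ge_ereal_sup => _ [k _ <-]; exact: ratio_le1.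
apply/lee_subgt0Pr => e e0.
have [K HK] := getK e0.
have [n [a [Nn n0 aK Pa]]] := H K N.
apply: le_ereal_sup_tmp; exists (ratio P n); first by exists n.
rewrite /ratio -EFinB lee_fin ler_pdivlMr ?ltr0n //.
have hc := card_ge Pa.
have an : (a <= n)%N by apply: leq_trans aK; rewrite leq_pmulr.
have hc' : n%:R - a%:R <= (#|[set i : 'I_n | P i]|)%:R :> R by rewrite -natrB // ler_nat.
have ha : a%:R * K.+1%:R <= n%:R :> R by rewrite -natrM ler_nat.
have a0 : 0 <= a%:R :> R by [].
nra.
Qed.

Lemma Flow0 (P : nat -> bool) :
  (forall K N, exists n a, [/\ (N <= n)%N, (0 < n)%N, (a * K.+1 <= n)%N &
      forall i, (i < n)%N -> P i -> (i < a)%N]) ->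
  limn_einf (ratio P) = 0%E.
Proof.
move=> H; rewrite limn_einf_lim.
suff -> : einfs (ratio P) = fun _ => 0%E by rewrite lim_cst.
apply/funext => N /=; apply/eqP; rewrite eq_le; apply/andP; split; last first.
  by apply: le_ereal_inf_tmp => _ [k _ <-]; exact: ratio_ge0.
apply/lee_addgt0Pr => e e0.
have [K HK] := getK e0.
have [n [a [Nn n0 aK Pa]]] := H K N.
apply: ge_ereal_inf; exists (ratio P n); first by exists n.
rewrite /ratio add0e lee_fin ler_pdivrMr ?ltr0n //.
have hc := card_le Pa.
have hc' : (#|[set i : 'I_n | P i]|)%:R <= a%:R :> R by rewrite ler_nat.
have ha : a%:R * K.+1%:R <= n%:R :> R by rewrite -natrM ler_nat.
have a0 : 0 <= a%:R :> R by [].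
nra.
Qed.

End Dens.

Section Dyn.
Variables (G : countType) (phi : G -> G) (X : Type) (x1 x2 : X).
Hypothesis x12 : x1 <> x2.
Hypothesis NP : forall a n, (0 < n)%N -> iter n phi a <> a.
Variable a0 : G.
Variable enc : X -> nat.
Hypothesis enc_inj : injective enc.

Lemma orbit_inj a p q : iter p phi a = iter q phi a -> p = q.
Proof.
wlog pq : p q / (p <= q)%N.
  move=> W E; case: (leqP p q) => h; first exact: W.
  by apply/esym; apply: W; [exact: ltnW | rewrite E].
move=> E; apply/eqP; rewrite eqn_leq pq /=; rewrite leqNgt; apply/negP => lt.
apply: (NP (a := iter p phi a) (n := q - p)); first by rewrite subn_gt0.
by rewrite -iterD subnK.
Qed.

Definition H g k := exists m, iter m phi g = iter (m + k) phi a0.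

Lemma H_uniq g k k' : H g k -> H g k' -> k = k'.
Proof.
move=> [m hm] [m' hm'].
have e1 : iter (m' + m) phi g = iter (m' + m + k) phi a0 by rewrite iterD hm -iterD addnA.
have e2 : iter (m' + m) phi g = iter (m' + m + k') phi a0 by rewrite addnC iterD hm' -iterD addnA.
have := orbit_inj (etrans (esym e1) e2); exact: addnI.
Qed.

Definition hv (w : nat -> X) (g : G) : X :=
  match pselect (exists k, H g k) with
  | left e => w (proj1_sig (cid e))
  | right _ => x1
  end.

Lemma hv_H w g k : H g k -> hv w g = w k.
Proof.
move=> h; rewrite /hv; case: pselect => [e|/(_ (ex_intro _ k h))//].
by case: cid => k' /= h'; rewrite (H_uniq h' h).
Qed.

Lemma hv_nH w g : ~ (exists k, H g k) -> hv w g = x1.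
Proof. by move=> n; rewrite /hv; case: pselect. Qed.

Lemma H_iter i : H (iter i phi a0) i.
Proof. by exists 0%N. Qed.

Lemma H_shift g i0 k0 j : H (iter i0 phi g) k0 -> H (iter (j + i0) phi g) (k0 + j).
Proof.
move=> [m hm]; exists m.
by rewrite iterD -iterD addnC iterD hm -!iterD; congr iter; rewrite addnC addnA.
Qed.

Lemma leave g L : exists M, forall i, (M <= i)%N -> (L <= pickle (iter i phi g))%N.
Proof.
elim: L => [|L [M HM]]; first by exists 0%N.
case: (pselect (exists i0, pickle (iter i0 phi g) = L)) => [[i0 hi0]|hn].
  exists (maxn M i0.+1) => i; rewrite geq_max => /andP [Mi i0i].
  rewrite ltn_neqAle HM // andbT; apply/eqP => E.
  have : iter i0 phi g = iter i phi g by apply: (pcan_inj pickleK); rewrite hi0 E.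
  by move/orbit_inj => eq; move: i0i; rewrite eq ltnn.
exists M => i Mi; rewrite ltn_neqAle HM // andbT; apply/eqP => E.
by apply: hn; exists i.
Qed.

Lemma fin_bound (Q : G -> nat -> Prop) :
  (forall g M M', (M <= M')%N -> Q g M -> Q g M') ->
  (forall g, exists M, Q g M) ->
  forall n0, exists M, forall g, (pickle g < n0)%N -> Q g M.
Proof.
move=> mono ex; elim=> [|n [M HM]]; first by exists 0%N.
case E: (@unpickle G n) => [g1|].
  have [M1 HM1] := ex g1.
  exists (maxn M M1) => g; rewrite ltnS leq_eqVlt => /orP [/eqP Hg|Hg].
    move: E; rewrite -Hg pickleK => -[->]; apply: mono HM1; exact: leq_maxr.
  apply: mono (HM g Hg); exact: leq_maxl.
exists M => g; rewrite ltnS leq_eqVlt => /orP [/eqP Hg|Hg]; last exact: HM.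
by move: E; rewrite -Hg pickleK.
Qed.

Definition T j := (2 ^ (2 ^ j))%N.
Definition blk i := trunc_log 2 (trunc_log 2 i).

Lemma T_sq j : T j.+1 = (T j * T j)%N.
Proof. by rewrite /T expnS mulnC expnM expnS expn1. Qed.

Lemma T_gt j : (j < T j)%N.
Proof. by apply: ltn_trans (ltn_expl j (ltnSn 1)) _; rewrite /T ltn_exp2l // ltn_expl. Qed.

Lemma blk_eq j i : (T j <= i < T j.+1)%N -> blk i = j.
Proof.
move=> /andP [lo hi]; rewrite /blk.
have i0 : (0 < i)%N by apply: leq_trans lo; rewrite expn_gt0.
apply: trunc_log_eq => //; apply/andP; split.
  by apply: trunc_log_max.
have := trunc_logP (leqnn 2) i0 => h.
have : (2 ^ trunc_log 2 i < 2 ^ (2 ^ j.+1))%N by apply: leq_ltn_trans h hi.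
by rewrite ltn_exp2l.
Qed.

Definition nu m := if @unpickle (nat * nat)%type m is Some p then p.1 else 0%N.

Lemma nu_inf k N : exists m, (N < m)%N /\ nu m = k.
Proof.
have inj : injective (fun t : nat => pickle (k, t)).
  by move=> t t' /(pcan_inj pickleK) [].
have [t ht] := injective_gtn inj N.
by exists (pickle (k, t)); split => //; rewrite /nu pickleK.
Qed.

Definition word (b : nat -> bool) i : X :=
  if odd (blk i) && ~~ b (nu (blk i)./2) then x2 else x1.

Lemma word_even b i : ~~ odd (blk i) -> word b i = x1.
Proof. by rewrite /word => /negbTE ->. Qed.

Lemma word_diff b b' i m : b (nu m) <> b' (nu m) -> blk i = m.*2.+1 ->
  word b i <> word b' i.
Proof.
move=> bb E; rewrite /word E /= odd_double /= uphalf_double.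
by case: (b (nu m)) bb; case: (b' (nu m)) => //= _; first exact: nesym.
Qed.

Definition param := ((nat -> bool) * seq X)%type.

Definition code (p : param) : nat -> bool :=
  fun k => if odd k then (k./2 == pickle (map enc p.2)) else p.1 k./2.

Lemma code_inj p p' : code p = code p' -> p = p'.
Proof.
case: p => b l; case: p' => b' l' E.
have eb : b = b'.
  apply/funext => k; have := congr1 (fun f => f k.*2) E.
  rewrite /code odd_double /= => h.
  exact: (etrans (etrans (congr1 b (esym (doubleK k))) h) (congr1 b' (doubleK k))).
have el : l = l'.
  have := congr1 (fun f => f (pickle (map enc l)).*2.+1) E.
  rewrite /code /= odd_double /= uphalf_double eqxx => /esym/eqP /(pcan_inj pickleK).
  exact: inj_map.
by rewrite eb el.
Qed.

Definition elt (p : param) (g : G) : X :=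
  if (pickle g < size p.2)%N then nth x1 p.2 (pickle g) else hv (word (code p)) g.

Definition Qb (p : param) (g : G) (M : nat) :=
  forall i, (M <= i)%N -> (forall k, (i - M <= k <= i + M)%N -> ~~ odd (blk k)) ->
  elt p (iter i phi g) = x1.

Lemma Qb_mono p g M M' : (M <= M')%N -> Qb p g M -> Qb p g M'.
Proof.
move=> MM h i Mi W; apply: h; first exact: leq_trans Mi.
move=> k /andP [lo hi]; apply: W; apply/andP; split.
  by apply: leq_trans lo; apply: leq_sub2l.
by apply: leq_trans hi _; rewrite leq_add2l.
Qed.

Lemma Qb_ex p g : exists M, Qb p g M.
Proof.
have [M1 HM1] := leave g (size p.2).
case: (pselect (exists i0 k0, H (iter i0 phi g) k0)) => [[i0 [k0 h]]|hn].
  exists (M1 + i0 + k0)%N => i Mi W.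
  rewrite /elt ltnNge HM1 /=; last by apply: leq_trans Mi; rewrite -addnA leq_addr.
  have ii : i = ((i - i0) + i0)%N by rewrite subnK //; apply: leq_trans Mi; lia.
  rewrite ii (hv_H _ (H_shift (i - i0) h)); apply: word_even; apply: W; lia.
exists M1 => i Mi _; rewrite /elt ltnNge HM1 //=.
apply: hv_nH => -[k hk].
by apply: hn; exists i, k.
Qed.

Lemma Qb_all p p' n0 : exists M, forall g, (pickle g < n0)%N -> Qb p g M /\ Qb p' g M.
Proof.
apply: fin_bound.
  by move=> g M M' MM [h1 h2]; split; apply: Qb_mono MM _.
move=> g; have [M1 h1] := Qb_ex p g; have [M2 h2] := Qb_ex p' g.
exists (maxn M1 M2); split; [apply: Qb_mono h1; exact: leq_maxl|apply: Qb_mono h2; exact: leq_maxr].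
Qed.

Lemma num1 N M K t : (N + (2 * M + 1) * K.+1 + 1 < t)%N ->
  [/\ (N <= t * t - M)%N, (0 < t * t - M)%N & ((t + M) * K.+1 <= t * t - M)%N].
Proof.
move=> h; have h2 : (t <= t * t)%N by rewrite leq_pmulr //; lia.
have h3 : ((N + (2 * M + 1) * K.+1 + 1).+1 * t <= t * t)%N by rewrite leq_mul2r h orbT.
split; nia.
Qed.

Lemma C2 p p' n0 : forall K N, exists n a, [/\ (N <= n)%N, (0 < n)%N, (a * K.+1 <= n)%N &
  forall i, (a <= i < n)%N -> forall g, (pickle g < n0)%N ->
     elt p (iter i phi g) = elt p' (iter i phi g)].
Proof.
move=> K N; have [M HM] := Qb_all p p' n0.
pose Z := (N + (2 * M + 1) * K.+1 + 1)%N.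
pose j := Z.*2.
have Tj : (Z < T j)%N by apply: leq_trans (T_gt j); rewrite /j -addnn leq_addr.
have Tj1 := T_sq j.
have [n1 n2 n3] := num1 Tj.
exists (T j.+1 - M)%N, (T j + M)%N; rewrite Tj1; split => //.
move=> i /andP [lo hi] g Hg; have [h1 h2] := HM g Hg.
have W : forall k, (i - M <= k <= i + M)%N -> ~~ odd (blk k).
  move=> k /andP [k1 k2]; rewrite (@blk_eq j k); first by rewrite /j odd_double.
  rewrite Tj1; apply/andP; split; lia.
rewrite h1 ?h2 //; lia.
Qed.

Lemma C3 p p' : p <> p' -> forall K N, exists n a, [/\ (N <= n)%N, (0 < n)%N, (a * K.+1 <= n)%N &
  forall i, (i < n)%N -> elt p (iter i phi a0) = elt p' (iter i phi a0) -> (i < a)%N].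
Proof.
move=> pp K N.
have [k hk] : exists k, code p k <> code p' k.
  apply: contrapT => hn; apply: pp; apply: code_inj; apply/funext => k.
  by apply: contrapT => hk; apply: hn; exists k.
have [M HM] := leave a0 (maxn (size p.2) (size p'.2)).
pose Z := (N + (2 * M + 1) * K.+1 + 1)%N.
have [m [Zm num]] := nu_inf k Z.
pose j := m.*2.+1.
have Tj : (Z < T j)%N by apply: leq_trans (T_gt j); rewrite /j -addnn; lia.
have Tj1 := T_sq j.
have [n1 n2 n3] := num1 Tj.
exists (T j.+1), (T j + M)%N; rewrite Tj1; split; [lia|lia|lia|].
move=> i hi E; rewrite ltnNge; apply/negP => ai; move: E.
have Mi : (M <= i)%N by lia.
have := HM i Mi; rewrite geq_max => /andP [s1 s2].
rewrite /elt ltnNge s1 ltnNge s2 /= !(hv_H _ (H_iter i)).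
apply: (@word_diff _ _ _ m); first by rewrite num.
apply: (@blk_eq j); rewrite Tj1; apply/andP; split; lia.
Qed.

End Dyn.

Lemma cantor (h : (nat -> bool) -> nat) : ~ injective h.
Proof.
move=> hI.
pose b n := if pselect (exists b', h b' = n) is left e then ~~ (proj1_sig (cid e)) n else false.
have : b (h b) = ~~ b (h b).
  rewrite {1}/b; case: pselect => [e|]; last by case; exists b.
  by case: cid => b' /= /hI ->.
by case: (b (h b)).
Qed.

Lemma minpos (R : realType) (c : nat -> R) p : (forall r, 0 < c r) ->
  exists c0, 0 < c0 /\ forall r, (r < p)%N -> c0 <= c r.
Proof.
move=> cp; elim: p => [|p [c0 [c00 H]]]; first by exists 1.
exists (Num.min c0 (c p)); split; first by rewrite lt_min c00 cp.
move=> r; rewrite ltnS leq_eqVlt => /orP [/eqP ->|rp]; first by rewrite ge_min lexx orbT.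
by rewrite ge_min H.
Qed.

Lemma iterS_sigma (G : Type) (X : Type) (phi : G -> G) i (x : G -> X) :
  iter i (sigma_phi phi) x = (fun a => x (iter i phi a)).
Proof.
elim: i x => [|i IH] x //=; rewrite IH; apply/funext => a.
by rewrite /sigma_phi -iterSr.
Qed.

Lemma limn_esup0 (R : realType) : limn_esup (fun _ : nat => (0 : \bar R)) = 0%E.
Proof. rewrite is_cvg_limn_esupE; [exact: lim_cst | exact: is_cvg_cst]. Qed.

Theorem theorem4p4 (R : realType) (X : discreteTopologicalType) (G : countType)
    (phi : G -> G) (d : (G -> X) -> (G -> X) -> R) :
  finite_set [set: X] ->
  (exists x1 x2 : X, x1 <> x2) ->
  (exists g : G, True) ->
  is_metric d ->
  @metric_compatible R {ptws G -> X} d ->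
  @dense_distributional_chaotic R {ptws G -> X} d (sigma_phi phi) <-> ~ has_periodic_point phi.
Proof.
move=> fX [x1 [x2 x12]] [g0 _] Hd Hc.
split.
- move=> [A [dA _ [eps eps0 HA]]] [a [p [p0 Hp]]].
  pose Ox (z : X) := [set v : {ptws G -> X} | v a = z].
  have oO z : open (Ox z).
    rewrite openE => w /= wa; rewrite /interior.
    by apply: filterS (pc a w) => z' /= e; rewrite /Ox /= e.
  have [x [Oxx Ax]] := dA _ (ex_intro _ (fun _ => x1) erefl) (oO x1).
  have [y [Oyy Ay]] := dA _ (ex_intro _ (fun _ => x2) erefl) (oO x2).
  have xy : x <> y by move=> E; apply: x12; rewrite -Oxx -Oyy E.
  have [Fu _] := HA x y Ax Ay xy.
  have H2 : forall r : nat, exists c : R, 0 < c /\ (forall u v : {ptws G -> X},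
      d u v < c -> u (iter r phi a) = v (iter r phi a)).
    by move=> r; have [c ? ?] := U2 fX Hd Hc (iter r phi a); exists c.
  have [cf Hcf] := choice H2.
  have [c0 [c00 Hc0]] := minpos p (fun r => (Hcf r).1).
  have hr : forall i, exists r, (r < p)%N /\ iter (i + r) phi a = a.
    elim=> [|i [r [rp hir]]]; first by exists 0%N.
    case: r rp hir => [|r] rp hir.
      exists p.-1; split; first by rewrite prednK.
      by rewrite addSnnS prednK // addnC iterD; rewrite addn0 in hir; rewrite hir Hp.
    by exists r; split; [exact: ltnW | rewrite addSnnS].
  have Fz := Fu c0 c00.
  have E : F_up d (sigma_phi phi) x y c0 = 0%E.
    rewrite /F_up -(limn_esup0 R); congr limn_esup; apply/funext => n.
    suff -> : xi d (sigma_phi phi) x y c0 n = 0%N by rewrite mul0r.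
    apply/eqP; rewrite -leqn0 /xi.
    apply: (@card_le (fun i => d (iter i (sigma_phi phi) x) (iter i (sigma_phi phi) y) < c0) n 0%N).
    move=> i _ hd; exfalso.
    have [r [rp hir]] := hr i.
    have := (Hcf r).2 _ _ (lt_le_trans hd (Hc0 r rp)).
    rewrite !iterS_sigma -!iterD hir Oxx Oyy; exact: x12.
  by move: Fz; rewrite E => -[] /eqP; rewrite eq_sym oner_eq0.
move=> NPP.
have NP : forall a n, (0 < n)%N -> iter n phi a <> a by move=> a n n0 E; apply: NPP; exists a, n.
have [enc encI] : exists enc : X -> nat, injective enc.
  have /countable_injP [f fI] := finite_set_countable fX.
  by exists f => u v E; apply: fI => //; rewrite in_setT.
pose el := elt phi x1 x2 g0 enc.
have el_inj : forall p p', p <> p' -> el p <> el p'.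
  move=> p p' pp E.
  have [n [a [_ n0 aK h4]]] := C3 x12 NP g0 encI pp 1 0.
  have an : (a < n)%N by lia.
  by have := h4 a an (congr1 (fun f => f (iter a phi g0)) E); rewrite ltnn.
have [c c0 Hc0] := U2 fX Hd Hc g0.
exists (range el); split.
- move=> O [u Ou] oO.
  have [n0 Hn0] := nbhs_cyl oO Ou.
  pose uat k := if @unpickle G k is Some g then u g else x1.
  pose l := map uat (iota 0 n0).
  exists (el (fun _ => true, l)); split; last by exists (fun _ => true, l).
  apply: Hn0 => g hg.
  rewrite /el /elt /= /l size_map size_iota hg (nth_map 0%N) ?size_iota //.
  by rewrite nth_iota // add0n /uat pickleK.
- move=> cA; have /countable_injP [f fI] := cA.
  apply: (@cantor (fun b : nat -> bool => f (el (b, [::])))).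
  move=> b b' E; apply: contrapT => bb.
  have neq : (b, [::]) <> (b', [::] : seq X) by case.
  by apply: (el_inj _ _ neq); apply: fI => //; rewrite in_setE; [exists (b, [::])|exists (b', [::])].
exists c; first by [].
move=> x y [p _ <-] [p' _ <-] xy.
have pp : p <> p' by move=> E; apply: xy; rewrite E.
split.
- move=> s s0.
  have [n0 Hn0] := U1 fX Hd Hc s0.
  rewrite /F_up.
  change (limn_esup (@ratio R (fun i => d (iter i (sigma_phi phi) (el p)) (iter i (sigma_phi phi) (el p')) < s)) = 1%E).
  apply: Fup1 => K N.
  have [n [a [h1 h2 h3 h4]]] := C2 x1 x2 NP g0 enc p p' n0 K N.
  exists n, a; split => // i hi; apply: Hn0.
  by rewrite !iterS_sigma => g hg /=; rewrite /el (h4 i hi g hg).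
- rewrite /F_low.
  change (limn_einf (@ratio R (fun i => d (iter i (sigma_phi phi) (el p)) (iter i (sigma_phi phi) (el p')) < c)) = 0%E).
  apply: Flow0 => K N.
  have [n [a [h1 h2 h3 h4]]] := C3 x12 NP g0 encI pp K N.
  exists n, a; split => // i hi Pi; apply: h4 => //.
  by have := Hc0 _ _ Pi; rewrite !iterS_sigma.
Qed.
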